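(* The category of event structures with equivalence does not have all pullbacks: there exist an ese $C$ whose equivalence is the identity relation and maps $f:A\to C$, $g:B\to C$ of ese's (where $A$ and $B$ are even edc's) such that no pullback of $f$ and $g$ exists in the category of ese's. (Since $\equiv_C$ is the identity, no pseudo pullback of $f$ and $g$ exists either.)
   Context: An event structure with equivalence (ese) $(P,\le,\mathrm{Con},\equiv)$: a prime event structure (partial order $\le$ with finite down-sets; nonempty subset-closed family $\mathrm{Con}$ of finite subsets containing singletons, with $X\in\mathrm{Con}$, $e\le e'\in X\Rightarrow X\cup\{e\}\in\mathrm{Con}$) with an equivalence relation $\equiv$ on $P$. Configurations: down-closed sets with all finite subsets in $\mathrm{Con}$. A map of ese's $f:P\to Q$ is a partial function such that if $p_1\equiv_P p_2$ then $f(p_1),f(p_2)$ are both undefined or both defined with $f(p_1)\equiv_Q f(p_2)$; and for every finite configuration $x$ of $P$, $fx$ is a finite configuration of $Q$ and $p_1,p_2\in x$, $f(p_1)\equiv_Q f(p_2)$ imply $p_1\equiv_P p_2$. Maps compose as partial functions; the category of ese's is ordinary category with these maps. An edc is an ese in which $p_1,p_2\le p$ and $p_1\equiv p_2$ imply $p_1=p_2$. A pullback of $f,g$ is a pullback in the usual categorical sense. A pseudo pullback is an object $D$ with maps $p:D\to A$, $q:D\to B$ with $f\circ p\equiv g\circ q$ such that for any $D'$, $p',q'$ with $f\circ p'\equiv g\circ q'$ there is a unique $h:D'\to D$ with $p'=p\circ h$, $q'=q\circ h$; here two maps are equivalent iff they are defined on the same elements and pointwise $\equiv$-equivalent. *)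

(* Defs.v *)
From Stdlib Require Import List.
Set Implicit Arguments.

Definition finite_set (T : Type) (X : T -> Prop) : Prop :=
  exists l : list T, forall x, X x -> In x l.

Definition subset_of (T : Type) (X Y : T -> Prop) : Prop := forall x, X x -> Y x.

Record ese := {
  ev : Type;
  le : ev -> ev -> Prop;
  Con : (ev -> Prop) -> Prop;
  eqv : ev -> ev -> Prop;
  le_refl : forall e, le e e;
  le_antisym : forall e e', le e e' -> le e' e -> e = e';
  le_trans : forall e1 e2 e3, le e1 e2 -> le e2 e3 -> le e1 e3;
  le_finite_down : forall e, finite_set (fun x => le x e);
  Con_finite : forall X, Con X -> finite_set X;
  Con_nonempty : exists X, Con X;
  Con_subset : forall X Y, Con X -> subset_of Y X -> Con Y;
  Con_singleton : forall e, Con (fun x => x = e);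
  Con_down : forall X e e', Con X -> le e e' -> X e' -> Con (fun x => X x \/ x = e);
  eqv_refl : forall e, eqv e e;
  eqv_sym : forall e e', eqv e e' -> eqv e' e;
  eqv_trans : forall e1 e2 e3, eqv e1 e2 -> eqv e2 e3 -> eqv e1 e3
}.

Definition configuration (P : ese) (x : ev P -> Prop) : Prop :=
  (forall e e', x e' -> le P e e' -> x e) /\
  (forall Y, subset_of Y x -> finite_set Y -> Con P Y).

Definition finite_configuration (P : ese) (x : ev P -> Prop) : Prop :=
  configuration P x /\ finite_set x.

Definition pimage {P Q : ese} (f : ev P -> option (ev Q)) (x : ev P -> Prop)
  : ev Q -> Prop := fun q => exists p, x p /\ f p = Some q.

Definition is_map {P Q : ese} (f : ev P -> option (ev Q)) : Prop :=
  (forall p1 p2, eqv P p1 p2 ->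
     (f p1 = None /\ f p2 = None) \/
     (exists q1 q2, f p1 = Some q1 /\ f p2 = Some q2 /\ eqv Q q1 q2)) /\
  (forall x, finite_configuration P x ->
     finite_configuration Q (pimage f x) /\
     (forall p1 p2 q1 q2, x p1 -> x p2 -> f p1 = Some q1 -> f p2 = Some q2 ->
        eqv Q q1 q2 -> eqv P p1 p2)).

Definition pcomp {P Q R : ese} (g : ev Q -> option (ev R)) (f : ev P -> option (ev Q))
  : ev P -> option (ev R) :=
  fun p => match f p with Some q => g q | None => None end.

Definition map_eq {P Q : ese} (f1 f2 : ev P -> option (ev Q)) : Prop :=
  forall p, f1 p = f2 p.

Definition map_equiv {P Q : ese} (f1 f2 : ev P -> option (ev Q)) : Prop :=
  forall p, (f1 p = None /\ f2 p = None) \/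
            (exists a b, f1 p = Some a /\ f2 p = Some b /\ eqv Q a b).

Definition is_edc (P : ese) : Prop :=
  forall p1 p2 p, le P p1 p -> le P p2 p -> eqv P p1 p2 -> p1 = p2.

Definition is_pullback {A B C : ese} (f : ev A -> option (ev C)) (g : ev B -> option (ev C))
  (D : ese) (p : ev D -> option (ev A)) (q : ev D -> option (ev B)) : Prop :=
  is_map p /\ is_map q /\ map_eq (pcomp f p) (pcomp g q) /\
  forall (D' : ese) (p' : ev D' -> option (ev A)) (q' : ev D' -> option (ev B)),
    is_map p' -> is_map q' -> map_eq (pcomp f p') (pcomp g q') ->
    exists h : ev D' -> option (ev D),
      is_map h /\ map_eq p' (pcomp p h) /\ map_eq q' (pcomp q h) /\
      forall h' : ev D' -> option (ev D),
        is_map h' -> map_eq p' (pcomp p h') -> map_eq q' (pcomp q h') -> map_eq h' h.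

Definition has_pullback {A B C : ese} (f : ev A -> option (ev C)) (g : ev B -> option (ev C))
  : Prop := exists D p q, is_pullback f g D p q.

Definition is_pseudo_pullback {A B C : ese} (f : ev A -> option (ev C)) (g : ev B -> option (ev C))
  (D : ese) (p : ev D -> option (ev A)) (q : ev D -> option (ev B)) : Prop :=
  is_map p /\ is_map q /\ map_equiv (pcomp f p) (pcomp g q) /\
  forall (D' : ese) (p' : ev D' -> option (ev A)) (q' : ev D' -> option (ev B)),
    is_map p' -> is_map q' -> map_equiv (pcomp f p') (pcomp g q') ->
    exists h : ev D' -> option (ev D),
      is_map h /\ map_eq p' (pcomp p h) /\ map_eq q' (pcomp q h) /\
      forall h' : ev D' -> option (ev D),
        is_map h' -> map_eq p' (pcomp p h') -> map_eq q' (pcomp q h') -> map_eq h' h.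

Definition has_pseudo_pullback {A B C : ese} (f : ev A -> option (ev C)) (g : ev B -> option (ev C))
  : Prop := exists D p q, is_pseudo_pullback f g D p q.

(* Main.v *)
Require Import Defs.
From Stdlib Require Import List.
Import ListNotations.

(* Counterexample: A = B = {a0 == a0' concurrent, a0 < a1}, C one event,
   f = g = everywhere undefined.  A pullback (= product) would have to
   contain an event with two distinct histories, breaking uniqueness. *)

Section Fin.
Variable T : Type.
Variable enum : list T.
Hypothesis Henum : forall x, In x enum.
Variable lb : T -> T -> bool.
Hypothesis lr : forall e, lb e e = true.
Hypothesis la : forall e e', lb e e' = true -> lb e' e = true -> e = e'.
Hypothesis lt : forall e1 e2 e3, lb e1 e2 = true -> lb e2 e3 = true -> lb e1 e3 = true.
Variable eb : T -> T -> bool.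
Hypothesis er : forall e, eb e e = true.
Hypothesis es : forall e e', eb e e' = true -> eb e' e = true.
Hypothesis et : forall e1 e2 e3, eb e1 e2 = true -> eb e2 e3 = true -> eb e1 e3 = true.

Lemma fin_down : forall e : T, finite_set (fun x => lb x e = true).
Proof. intros e. exists enum. intros x _. apply Henum. Qed.
Lemma fin_ne : exists X : T -> Prop, finite_set X.
Proof. exists (fun _ => False). exists nil. intros x []. Qed.
Lemma fin_sub : forall X Y : T -> Prop, finite_set X -> subset_of Y X -> finite_set Y.
Proof. intros X Y [l Hl] H. exists l. intros x Hx. apply Hl, H, Hx. Qed.
Lemma fin_single : forall e : T, finite_set (fun x => x = e).
Proof. intros e. exists [e]. intros x ->. left. reflexivity. Qed.
Lemma fin_downc : forall (X : T -> Prop) (e e' : T), finite_set X -> lb e e' = true -> X e' ->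
  finite_set (fun x => X x \/ x = e).
Proof. intros X e e' [l Hl] _ _. exists (e :: l). intros x [H| ->]. right; auto. left; auto. Qed.

Definition mkfin : ese :=
  {| ev := T; le := fun u v => lb u v = true; Con := @finite_set T;
     eqv := fun u v => eb u v = true;
     le_refl := lr; le_antisym := la; le_trans := lt;
     le_finite_down := fin_down; Con_finite := fun X H => H;
     Con_nonempty := fin_ne; Con_subset := fin_sub; Con_singleton := fin_single;
     Con_down := fin_downc; eqv_refl := er; eqv_sym := es; eqv_trans := et |}.
End Fin.

Lemma map_crit (P Q : ese) (f : ev P -> option (ev Q)) :
  (forall X, finite_set X -> Con Q X) ->
  (forall p1 p2, eqv P p1 p2 ->
     (f p1 = None /\ f p2 = None) \/
     (exists q1 q2, f p1 = Some q1 /\ f p2 = Some q2 /\ eqv Q q1 q2)) ->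
  (forall p q q', f p = Some q -> le Q q' q -> exists p', le P p' p /\ f p' = Some q') ->
  (forall p1 p2 q1 q2, f p1 = Some q1 -> f p2 = Some q2 -> eqv Q q1 q2 -> eqv P p1 p2) ->
  is_map f.
Proof.
  intros HC He Hl Hi. split; [exact He|].
  intros x [[Hd Hc] [l Hfin]]. split.
  - split; [split|].
    + intros q' q [p [Hxp Hfp]] Hle.
      destruct (Hl p q q' Hfp Hle) as [p' [Hp' Hfp']].
      exists p'. split; auto. eapply Hd; eauto.
    + intros Y _ HY. apply HC, HY.
    + exists (flat_map (fun p => match f p with Some q => [q] | None => [] end) l).
      intros q [p [Hxp Hfp]]. apply in_flat_map. exists p. split; auto.
      rewrite Hfp. left. reflexivity.
  - intros p1 p2 q1 q2 _ _. apply Hi.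
Qed.

Inductive EvA := a0 | a0' | a1.
Inductive Ev4 := ex | ey | ez | ee.

Definition leA (u v : EvA) : bool :=
  match u, v with
  | a0, a0 | a0', a0' | a1, a1 | a0, a1 => true
  | _, _ => false end.
Definition eqA (u v : EvA) : bool :=
  match u, v with
  | a1, a1 => true | a1, _ => false | _, a1 => false | _, _ => true end.

Definition le4 (b1 b2 b3 : bool) (u v : Ev4) : bool :=
  match u, v with
  | ex, ex | ey, ey | ez, ez | ee, ee => true
  | ex, ee => b1 | ey, ee => b2 | ez, ee => b3
  | _, _ => false end.
Definition eq4 (u v : Ev4) : bool :=
  match u, v with
  | ee, ee => true | ee, _ => false | _, ee => false | _, _ => true end.

Ltac brute := intros; repeat match goal with
  | x : EvA |- _ => destruct x | x : Ev4 |- _ => destruct x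
  | x : unit |- _ => destruct x | x : bool |- _ => destruct x end;
  simpl in *; try reflexivity; try discriminate; try congruence; auto.

Lemma enumA : forall x, In x [a0; a0'; a1]. Proof. destruct x; simpl; tauto. Qed.
Lemma enum4 : forall x, In x [ex; ey; ez; ee]. Proof. destruct x; simpl; tauto. Qed.
Lemma enumU : forall x : unit, In x [tt]. Proof. destruct x; simpl; tauto. Qed.

Lemma leA_r : forall e, leA e e = true. Proof. brute. Qed.
Lemma leA_a : forall e e', leA e e' = true -> leA e' e = true -> e = e'. Proof. brute. Qed.
Lemma leA_t : forall e1 e2 e3, leA e1 e2 = true -> leA e2 e3 = true -> leA e1 e3 = true. Proof. brute. Qed.
Lemma eqA_r : forall e, eqA e e = true. Proof. brute. Qed.
Lemma eqA_s : forall e e', eqA e e' = true -> eqA e' e = true. Proof. brute. Qed.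
Lemma eqA_t : forall e1 e2 e3, eqA e1 e2 = true -> eqA e2 e3 = true -> eqA e1 e3 = true. Proof. brute. Qed.

Lemma le4_r b1 b2 b3 : forall e, le4 b1 b2 b3 e e = true. Proof. brute. Qed.
Lemma le4_a b1 b2 b3 : forall e e', le4 b1 b2 b3 e e' = true -> le4 b1 b2 b3 e' e = true -> e = e'.
Proof. brute. Qed.
Lemma le4_t b1 b2 b3 : forall e1 e2 e3, le4 b1 b2 b3 e1 e2 = true -> le4 b1 b2 b3 e2 e3 = true ->
  le4 b1 b2 b3 e1 e3 = true. Proof. brute. Qed.
Lemma eq4_r : forall e, eq4 e e = true. Proof. brute. Qed.
Lemma eq4_s : forall e e', eq4 e e' = true -> eq4 e' e = true. Proof. brute. Qed.
Lemma eq4_t : forall e1 e2 e3, eq4 e1 e2 = true -> eq4 e2 e3 = true -> eq4 e1 e3 = true. Proof. brute. Qed.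

Definition luU (u v : unit) : bool := true.
Definition eqU (u v : unit) : bool := true.
Lemma lu_r : forall e, luU e e = true. Proof. reflexivity. Qed.
Lemma lu_a : forall e e', luU e e' = true -> luU e' e = true -> e = e'. Proof. brute. Qed.
Lemma lu_t : forall e1 e2 e3, luU e1 e2 = true -> luU e2 e3 = true -> luU e1 e3 = true.
Proof. reflexivity. Qed.

Definition EA : ese := @mkfin EvA _ enumA leA leA_r leA_a leA_t eqA eqA_r eqA_s eqA_t.
Definition EC : ese := @mkfin unit _ enumU luU lu_r lu_a lu_t luU lu_r (fun e e' _ => eq_refl) lu_t.
Definition mkD (b1 b2 b3 : bool) : ese :=
  @mkfin Ev4 _ enum4 (le4 b1 b2 b3) (le4_r b1 b2 b3) (le4_a b1 b2 b3) (le4_t b1 b2 b3) eq4 eq4_r eq4_s eq4_t.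

Definition pA (u : Ev4) : option EvA :=
  match u with ex => Some a0 | ey => Some a0 | ez => Some a0' | ee => Some a1 end.
Definition qA (u : Ev4) : option EvA :=
  match u with ex => Some a0 | ey => Some a0' | ez => Some a0 | ee => Some a1 end.

Ltac wit := first [ exists ex; split; reflexivity | exists ey; split; reflexivity
                  | exists ez; split; reflexivity | exists ee; split; reflexivity ].

Ltac mapcrit :=
  apply map_crit;
  [ intros X H; exact H
  | intros p1 p2 H; destruct p1, p2; simpl in H; try discriminate;
    right; do 2 eexists; split; [reflexivity| split; reflexivity]
  | intros p q q' H Hl; destruct p; simpl in H; inversion H; subst;
    destruct q'; simpl in Hl; try discriminate; wit
  | intros p1 p2 q1 q2 H1 H2 H3; destruct p1, p2; simpl in *;
    inversion H1; inversion H2; subst; simpl in *; try reflexivity; try discriminate ].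

Lemma mp4 : is_map (P:=mkD true false false) (Q:=EA) pA. Proof. apply map_crit.
 - intros X H; exact H.
 - intros p1 p2 H; destruct p1, p2; simpl in H; try discriminate.
    all: right; do 2 eexists; split; [reflexivity| split; reflexivity].
 - intros p q q' H Hl; destruct p; simpl in H; inversion H; subst.
   all: destruct q'; simpl in Hl; try discriminate.
   all: wit.
 - intros p1 p2 q1 q2 H1 H2 H3; destruct p1, p2; simpl in *;
    inversion H1; inversion H2; subst; simpl in *; try reflexivity; try discriminate.
Qed.
Lemma mq4 : is_map (P:=mkD true false false) (Q:=EA) qA. Proof. apply map_crit.
 - intros X H; exact H.
 - intros p1 p2 H; destruct p1, p2; simpl in H; try discriminate.
    all: right; do 2 eexists; split; [reflexivity| split; reflexivity].
 - intros p q q' H Hl; destruct p; simpl in H; inversion H; subst.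
   all: destruct q'; simpl in Hl; try discriminate.
   all: wit.
 - intros p1 p2 q1 q2 H1 H2 H3; destruct p1, p2; simpl in *;
    inversion H1; inversion H2; subst; simpl in *; try reflexivity; try discriminate.
Qed.
Lemma mp5 : is_map (P:=mkD false true true) (Q:=EA) pA. Proof. apply map_crit.
 - intros X H; exact H.
 - intros p1 p2 H; destruct p1, p2; simpl in H; try discriminate.
    all: right; do 2 eexists; split; [reflexivity| split; reflexivity].
 - intros p q q' H Hl; destruct p; simpl in H; inversion H; subst.
   all: destruct q'; simpl in Hl; try discriminate.
   all: wit.
 - intros p1 p2 q1 q2 H1 H2 H3; destruct p1, p2; simpl in *;
    inversion H1; inversion H2; subst; simpl in *; try reflexivity; try discriminate.
Qed.
Lemma mq5 : is_map (P:=mkD false true true) (Q:=EA) qA. Proof. apply map_crit.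
 - intros X H; exact H.
 - intros p1 p2 H; destruct p1, p2; simpl in H; try discriminate.
    all: right; do 2 eexists; split; [reflexivity| split; reflexivity].
 - intros p q q' H Hl; destruct p; simpl in H; inversion H; subst.
   all: destruct q'; simpl in Hl; try discriminate.
   all: wit.
 - intros p1 p2 q1 q2 H1 H2 H3; destruct p1, p2; simpl in *;
    inversion H1; inversion H2; subst; simpl in *; try reflexivity; try discriminate.
Qed.

Lemma restrict (b1 b2 b3 c1 c2 c3 : bool) (Q : ese) (h : Ev4 -> option (ev Q)) :
  (forall u v, le4 b1 b2 b3 u v = true -> le4 c1 c2 c3 u v = true) ->
  is_map (P:=mkD b1 b2 b3) h -> is_map (P:=mkD c1 c2 c3) h.
Proof.
  intros Hle [H1 H2]. split; [exact H1|].
  intros x [[Hd Hc] Hf]. apply H2. split; [split|]; auto.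
  intros e e' Hx Hl. apply (Hd e e' Hx). apply Hle, Hl.
Qed.

Lemma fin_conf (b1 b2 b3 : bool) (x : Ev4 -> Prop) :
  (forall e e', x e' -> le4 b1 b2 b3 e e' = true -> x e) ->
  finite_configuration (mkD b1 b2 b3) x.
Proof.
  intros Hd. split; [split|].
  - exact Hd.
  - intros Y _ HY. exact HY.
  - exists [ex; ey; ez; ee]. intros y _. apply enum4.
Qed.

Lemma sub43 : forall u v, le4 true false false u v = true -> le4 true true true u v = true.
Proof. brute. Qed.
Lemma sub53 : forall u v, le4 false true true u v = true -> le4 true true true u v = true.
Proof. brute. Qed.

Lemma key (D : ese) (p q : ev D -> option (ev EA)) (Hq : is_map q)
  (U : forall (D' : ese) (p' q' : ev D' -> option (ev EA)), is_map p' -> is_map q' ->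
     exists h : ev D' -> option (ev D),
       is_map h /\ map_eq p' (pcomp p h) /\ map_eq q' (pcomp q h) /\
       forall h', is_map h' -> map_eq p' (pcomp p h') -> map_eq q' (pcomp q h') -> map_eq h' h) :
  False.
Proof.
  destruct (U (mkD true false false) pA qA mp4 mq4) as [h4 [Hh4 [Hp4 [Hq4 _]]]].
  destruct (U (mkD false true true) pA qA mp5 mq5) as [h5 [Hh5 [Hp5 [Hq5 _]]]].
  destruct (U (mkD true true true) pA qA
              (restrict _ _ _ _ _ _ _ _ sub43 mp4) (restrict _ _ _ _ _ _ _ _ sub43 mq4))
    as [h3 [_ [_ [_ Hu3]]]].
  assert (E4 := Hu3 h4 (restrict _ _ _ _ _ _ _ _ sub43 Hh4) Hp4 Hq4).
  assert (E5 := Hu3 h5 (restrict _ _ _ _ _ _ _ _ sub53 Hh5) Hp5 Hq5).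
  assert (E : forall u, h5 u = h4 u) by (intro u; rewrite E4, E5; reflexivity).
  clear E4 E5 Hu3.
  pose proof (Hp4 ex) as Px. pose proof (Hq4 ex) as Qx.
  pose proof (Hq4 ey) as Qy. pose proof (Hp4 ez) as Pz. pose proof (Hq4 ee) as Qe.
  unfold pcomp in *; simpl in *.
  destruct (h4 ex) as [dx|] eqn:Hx; [|discriminate].
  destruct (h4 ey) as [dy|] eqn:Hy; [|discriminate].
  destruct (h4 ez) as [dz|] eqn:Hz; [|discriminate].
  destruct (h4 ee) as [d|] eqn:He; [|discriminate].
  assert (C1 : finite_configuration D (pimage (P:=mkD true false false) h4 (fun u => u = ex \/ u = ee))).
  { apply (proj2 Hh4). apply fin_conf. intros u v [-> | ->] Hl; destruct u; simpl in Hl;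
    try discriminate; auto. }
  assert (C2 : finite_configuration D (pimage (P:=mkD false true true) h5 (fun u => u = ey \/ u = ez \/ u = ee))).
  { apply (proj2 Hh5). apply fin_conf. intros u v [-> | [-> | ->]] Hl; destruct u; simpl in Hl;
    try discriminate; auto. }
  assert (CS : finite_configuration D (fun t => t = d)).
  { split; [split|].
    - intros d1 d2 Hd2 Hl. subst d2.
      destruct C1 as [[Hd1 _] _]. destruct C2 as [[Hd2 _] _].
      assert (I1 := Hd1 d1 d (ex_intro _ ee (conj (or_intror eq_refl) He)) Hl).
      assert (I2 := Hd2 d1 d (ex_intro _ ee (conj (or_intror (or_intror eq_refl)) (eq_trans (E ee) He))) Hl).
      destruct I1 as [u [[-> | ->] Hu]]; [|congruence].
      destruct I2 as [v [[-> | [-> | ->]] Hv]]; rewrite E in Hv; congruence.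
    - intros Y HY _. exact (Con_subset D (Con_singleton D d) HY).
    - exists [d]. intros t ->. left; reflexivity. }
  destruct (proj1 (proj2 Hq _ CS)) as [[Hdown _] _].
  assert (H0 := Hdown a0 a1 (ex_intro _ d (conj eq_refl (eq_sym Qe))) eq_refl).
  destruct H0 as [d' [-> Hd']]. congruence.
Qed.

Definition fN (u : ev EA) : option (ev EC) := None.

Lemma mfN : is_map (P:=EA) (Q:=EC) fN.
Proof.
  apply map_crit.
  - intros X H; exact H.
  - intros; left; split; reflexivity.
  - intros p0 q0 q' H; discriminate.
  - intros p1 p2 q1 q2 H; discriminate.
Qed.

Theorem mainTheorem8 :
  exists (A B C : ese) (f : ev A -> option (ev C)) (g : ev B -> option (ev C)),
    is_edc A /\ is_edc B /\
    (forall c1 c2 : ev C, eqv C c1 c2 <-> c1 = c2) /\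
    is_map f /\ is_map g /\
    ~ has_pullback f g /\ ~ has_pseudo_pullback f g.
Proof.
  assert (edc : is_edc EA).
  { unfold is_edc; simpl. brute. }
  exists EA, EA, EC, fN, fN.
  split; [exact edc|]. split; [exact edc|].
  split. { intros c1 c2; destruct c1, c2; simpl; split; auto. }
  split; [exact mfN|]. split; [exact mfN|].
  split.
  - intros [D [p [q [_ [Hq [_ U]]]]]].
    apply (key D p q Hq). intros D' p' q' H1 H2.
    apply U; auto. intro u; unfold pcomp, fN; destruct (p' u), (q' u); reflexivity.
  - intros [D [p [q [_ [Hq [_ U]]]]]].
    apply (key D p q Hq). intros D' p' q' H1 H2.
    apply U; auto. intro u; unfold pcomp, fN; destruct (p' u), (q' u); left; split; reflexivity.
Qed.
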